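(* Let $f_0:\mathbb{R}^n\times[0,\infty)\to\mathbb{R}$ be twice continuously differentiable in $\mathbf{x}$ and continuously differentiable in $t$, with $\nabla_{\mathbf{x}\mathbf{x}} f_0(\mathbf{x},t)\succeq m\mathbf{I}_n$ for some $m>0$ and all $(\mathbf{x},t)$. Let $\mathbf{x}^\star(t)=\arg\min_{\mathbf{x}\in\mathbb{R}^n} f_0(\mathbf{x},t)$. Let $\mathbf{P}\in\mathbb{S}^n_{++}$ with $\mathbf{P}\succeq\sigma\mathbf{I}_n$ for some $\sigma>0$, and let $\mathbf{x}(t)$, $t\ge 0$, be a solution of $$\dot{\mathbf{x}}(t)=-\nabla_{\mathbf{x}\mathbf{x}} f_0(\mathbf{x}(t),t)^{-1}\big[\mathbf{P}\nabla_{\mathbf{x}} f_0(\mathbf{x}(t),t)+\nabla_{\mathbf{x}t} f_0(\mathbf{x}(t),t)\big],\qquad \mathbf{x}(0)=\mathbf{x}_0,$$ with $\mathbf{x}_0\in\mathbb{R}^n$ arbitrary. Then there is a constant $0\le C(\mathbf{x}_0,m)<\infty$ (e.g. $C=\tfrac{2}{m}\|\nabla_{\mathbf{x}} f_0(\mathbf{x}_0,0)\|_2$) such that for all $t\ge 0$, $$\|\mathbf{x}(t)-\mathbf{x}^\star(t)\|_2\le C(\mathbf{x}_0,m)\,e^{-\sigma t}.$$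
   Context: $\nabla_{\mathbf{x}} f_0$ is the gradient in $\mathbf{x}$, $\nabla_{\mathbf{x}\mathbf{x}} f_0$ the Hessian in $\mathbf{x}$, and $\nabla_{\mathbf{x}t} f_0\in\mathbb{R}^n$ the partial derivative of $\nabla_{\mathbf{x}} f_0$ with respect to $t$. $\mathbb{S}^n_{++}$ denotes the symmetric positive definite $n\times n$ matrices; $\mathbf{A}\succeq\mathbf{B}$ means $\mathbf{A}-\mathbf{B}$ is positive semidefinite. *)

(* Defs.v *)
From mathcomp Require Import all_boot.
From Stdlib Require Import Reals.
Set Implicit Arguments. Unset Strict Implicit. Unset Printing Implicit Defensive.
Local Open Scope R_scope.

Definition vec (n : nat) := 'I_n -> R.
Definition mat (n : nat) := 'I_n -> 'I_n -> R.

Definition vadd n (u v : vec n) : vec n := fun i => u i + v i.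
Definition vsub n (u v : vec n) : vec n := fun i => u i - v i.
Definition vscale n (a : R) (u : vec n) : vec n := fun i => a * u i.
Definition vopp n (u : vec n) : vec n := fun i => - u i.

Definition basis n (i : 'I_n) : vec n := fun j => if i == j then 1 else 0.

Definition dot n (u v : vec n) : R := \big[Rplus/0]_(i < n) (u i * v i).
Definition norm2 n (u : vec n) : R := sqrt (dot u u).

Definition mulmv n (A : mat n) (v : vec n) : vec n :=
  fun i => \big[Rplus/0]_(j < n) (A i j * v j).

Definition symmetric n (A : mat n) : Prop := forall i j, A i j = A j i.
Definition posdef n (A : mat n) : Prop :=
  forall v : vec n, (exists i, v i <> 0) -> 0 < dot v (mulmv A v).
Definition spd n (A : mat n) : Prop := symmetric A /\ posdef A.
Definition loewner_ge_scalar n (A : mat n) (c : R) : Prop :=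
  forall v : vec n, c * dot v v <= dot v (mulmv A v).

Definition deriv_nonneg (g : R -> R) (t l : R) : Prop :=
  forall eps, 0 < eps -> exists delta, 0 < delta /\
    forall h, h <> 0 -> Rabs h < delta -> 0 <= t + h ->
      Rabs ((g (t + h) - g t) / h - l) < eps.

Definition cont_xt n (F : vec n -> R -> R) (x : vec n) (t : R) : Prop :=
  forall eps, 0 < eps -> exists delta, 0 < delta /\
    forall y s, 0 <= s -> norm2 (vsub y x) < delta -> Rabs (s - t) < delta ->
      Rabs (F y s - F x t) < eps.

Definition partial_x n (F : vec n -> R) (x : vec n) (i : 'I_n) (l : R) : Prop :=
  derivable_pt_lim (fun s => F (vadd x (vscale s (basis i)))) 0 l.

(* Main.v *)
From HB Require Import structures.
Require Import Defs.
From mathcomp Require Import all_boot.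
From mathcomp Require Import zify.
From Stdlib Require Import Reals Lra FunctionalExtensionality.
Local Open Scope R_scope.

Lemma Rplus_assoc' : associative Rplus. Proof. by move=> *; rewrite Rplus_assoc. Qed.
HB.instance Definition _ := Monoid.isComLaw.Build R 0 Rplus Rplus_assoc' Rplus_comm Rplus_0_l.

Notation SUM n F := (\big[Rplus/0]_(i < n) F i).

Lemma sum_le n (F G : 'I_n -> R) : (forall i, F i <= G i) -> SUM n F <= SUM n G.
Proof. move=> H. apply: (big_ind2 (fun a b => a <= b)) => //; [lra | move=> *; lra]. Qed.

Lemma sum_ge0 n (F : 'I_n -> R) : (forall i, 0 <= F i) -> 0 <= SUM n F.
Proof. move=> H. apply: (big_ind (fun a => 0 <= a)) => //; [lra | move=> *; lra]. Qed.

Lemma sum_abs n (F : 'I_n -> R) : Rabs (SUM n F) <= SUM n (fun i => Rabs (F i)).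
Proof.
apply: (big_ind2 (fun a b => Rabs a <= b)) => //.
- rewrite Rabs_R0; lra.
- move=> a b c d H1 H2. apply: Rle_trans (Rabs_triang _ _) _. lra.
- move=> i _; lra.
Qed.

Lemma sum_scal n (c : R) (F : 'I_n -> R) : c * SUM n F = SUM n (fun i => c * F i).
Proof.
apply: (big_ind2 (fun a b => c * a = b)) => //.
- ring.
- move=> a b d e <- <-; ring.
Qed.

Lemma sum_add n (F G : 'I_n -> R) : SUM n (fun i => F i + G i) = SUM n F + SUM n G.
Proof. by rewrite big_split. Qed.

Lemma sum_opp n (F : 'I_n -> R) : SUM n (fun i => - F i) = - SUM n F.
Proof.
apply: (big_ind2 (fun a b => a = - b)) => //.
- ring.
- move=> a b d e -> ->; ring.
Qed.

Lemma sum_ext n (F G : 'I_n -> R) : (forall i, F i = G i) -> SUM n F = SUM n G.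
Proof. move=> H. by apply: eq_bigr => i _. Qed.

Lemma sum_sub n (F G : 'I_n -> R) : SUM n (fun i => F i - G i) = SUM n F - SUM n G.
Proof.
rewrite /Rminus sum_add sum_opp //.
Qed.

Lemma sum_const n (c : R) : SUM n (fun _ => c) = INR n * c.
Proof.
elim: n => [|n IH]; first by rewrite big_ord0 /=; ring.
rewrite big_ord_recr IH S_INR /=; ring.
Qed.

Lemma sum_sq_le n (F : 'I_n -> R) :
  SUM n (fun i => F i * F i) <= SUM n (fun i => Rabs (F i)) * SUM n (fun i => Rabs (F i)).
Proof.
elim: n F => [|n IH] F; first by rewrite !big_ord0; lra.
rewrite !big_ord_recr /=.
set A := SUM n (fun i => Rabs (F (widen_ord (leqnSn n) i))).
have HA : 0 <= A by apply: sum_ge0 => i; apply: Rabs_pos.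
have := IH (fun i => F (widen_ord (leqnSn n) i)). rewrite -/A => H.
have h1 := Rabs_pos (F ord_max).
have h2 : F ord_max * F ord_max = Rabs (F ord_max) * Rabs (F ord_max).
  by rewrite -Rabs_mult Rabs_right //; apply: Rle_ge; nra.
rewrite h2. apply: Rle_trans (Rplus_le_compat_r _ _ _ H) _. have h3 := Rmult_le_pos _ _ HA h1. lra.
Qed.

Lemma dot_ge0 n (u : vec n) : 0 <= dot u u.
Proof. apply: sum_ge0 => i; nra. Qed.

Lemma norm2_le_sum n (u : vec n) : norm2 u <= SUM n (fun i => Rabs (u i)).
Proof.
rewrite /norm2 -(sqrt_square (SUM n (fun i => Rabs (u i)))); last by apply: sum_ge0 => i; apply: Rabs_pos.
apply: sqrt_le_1_alt. exact: sum_sq_le.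
Qed.

Lemma finmin n (Q : 'I_n -> R -> Prop) :
  (forall k d d', 0 < d' <= d -> Q k d -> Q k d') ->
  (forall k, exists d, 0 < d /\ Q k d) -> exists d, 0 < d /\ forall k, Q k d.
Proof.
elim: n Q => [|n IH] Q Hmon H.
  exists 1; split; [lra | by case].
have [d1 [Hd1 H1]] := IH (fun k => Q (widen_ord (leqnSn n) k))
   (fun k => Hmon _) (fun k => H _).
have [d2 [Hd2 H2]] := H ord_max.
exists (Rmin d1 d2); split; first by apply: Rmin_pos.
move=> k. case: (ltnP k n) => Hk.
- have -> : k = widen_ord (leqnSn n) (Ordinal Hk) by apply: val_inj.
  apply: Hmon (H1 _). split; [by apply: Rmin_pos | apply: Rmin_l].
- have -> : k = ord_max.
    apply: val_inj => /=. have := ltn_ord k. move: Hk. clear. move=> Hk Hk2. apply/eqP. by rewrite eqn_leq Hk -ltnS Hk2.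
  apply: Hmon H2. split; [by apply: Rmin_pos | apply: Rmin_r].
Qed.

Lemma vadd_scale n (w e : vec n) a b :
  vadd (vadd w (vscale a e)) (vscale b e) = vadd w (vscale (a + b) e).
Proof. apply: functional_extensionality => j. rewrite /vadd /vscale; ring. Qed.

Lemma vadd_scale0 n (w e : vec n) : vadd w (vscale 0 e) = w.
Proof. apply: functional_extensionality => j. rewrite /vadd /vscale; ring. Qed.

Lemma shift_deriv (f : R -> R) c l :
  derivable_pt_lim (fun h => f (c + h)) 0 l -> derivable_pt_lim f c l.
Proof.
move=> H eps Heps. have [d Hd] := H eps Heps. exists d => h Hh0 Hh.
have := Hd h Hh0 Hh. by rewrite Rplus_0_l Rplus_0_r.
Qed.

Lemma mvt_abs (f f' : R -> R) :
  (forall c, derivable_pt_lim f c (f' c)) ->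
  forall d, exists c, Rabs c <= Rabs d /\ f d - f 0 = f' c * d.
Proof.
move=> H d. case: (Rtotal_order d 0) => [Hd|[Hd|Hd]].
- have [c [Hc1 Hc2]] := MVT_cor2 f f' d 0 Hd (fun c _ => H c).
  exists c; split.
  + rewrite !Rabs_left; lra.
  + lra.
- subst d. exists 0; split; [lra | ring].
- have [c [Hc1 Hc2]] := MVT_cor2 f f' 0 d Hd (fun c _ => H c).
  exists c; split.
  + rewrite !Rabs_right; lra.
  + lra.
Qed.

Lemma tele n (a : nat -> R) :
  SUM n (fun k : 'I_n => a (nat_of_ord k).+1 - a k) = a n - a O.
Proof.
elim: n => [|n IH]; first by rewrite big_ord0; ring.
rewrite big_ord_recr /= IH; ring.
Qed.

Lemma norm2_le n (u v : vec n) : (forall j, u j * u j <= v j * v j) -> norm2 u <= norm2 v.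
Proof. move=> H. apply: sqrt_le_1_alt. exact: sum_le. Qed.

Lemma core n (grad : vec n -> R -> vec n) (hess : vec n -> R -> mat n)
 (Hhess : forall y t i j, 0 <= t -> partial_x (fun z => grad z t i) y j (hess y t i j))
 (Hch : forall y t i j, 0 <= t -> cont_xt (fun z s => hess z s i j) y t)
 z t i eps : 0 <= t -> 0 < eps -> exists d, 0 < d /\ forall y s, 0 <= s ->
   norm2 (vsub y z) < d -> Rabs (s - t) < d ->
  Rabs (grad y s i - grad z s i - SUM n (fun k => hess z t i k * (y k - z k)))
    <= eps * SUM n (fun k => Rabs (y k - z k)).
Proof.
move=> Ht Heps.
have [d [Hd HQ]] : exists d, 0 < d /\ forall k : 'I_n, (fun k d => forall w s, 0 <= s -> norm2 (vsub w z) < d ->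
   Rabs (s - t) < d -> Rabs (hess w s i k - hess z t i k) < eps) k d.
  apply: finmin.
  - move=> k d d' Hdd' H w s Hs H1 H2. apply: H => //; lra.
  - move=> k. exact: (Hch z t i k Ht eps Heps).
exists d; split => // y s Hs Hyz Hst.
pose zk (k : nat) : vec n := fun j => if leq j.+1 k then y j else z j.
have zkn : zk n = y.
  apply: functional_extensionality => j. by rewrite /zk ltn_ord.
have zk0 : zk O = z.
  apply: functional_extensionality => j. by rewrite /zk.
have Htel := tele n (fun k => grad (zk k) s i).
rewrite zkn zk0 in Htel. rewrite -Htel -sum_sub sum_scal.
eapply Rle_trans; first by apply: sum_abs.
apply: sum_le => k.
have Hsucc : zk k.+1 = vadd (zk k) (vscale (y k - z k) (basis k)).
  apply: functional_extensionality => j. rewrite /zk /vadd /vscale /basis.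
  case: (ltngtP j k) => Hjk.
  - have -> : (j < k.+1)%nat by lia.
    have -> : (k == j) = false by apply/eqP => Hkj; move: Hjk; rewrite Hkj ltnn.
    ring.
  - have -> : (j < k.+1)%nat = false by lia.
    have -> : (k == j) = false by apply/eqP => Hkj; move: Hjk; rewrite Hkj ltnn.
    ring.
  - have -> : (j < k.+1)%nat by lia.
    have -> : (k == j) by apply/eqP; apply: val_inj.
    have -> : j = k by apply: val_inj.
    ring.
rewrite Hsucc.
set w := zk k. set e := basis k. set dk := y k - z k.
have Hder : forall c, derivable_pt_lim (fun r => grad (vadd w (vscale r e)) s i) c
      (hess (vadd w (vscale c e)) s i k).
  move=> c. apply: shift_deriv.
  have -> : (fun h => grad (vadd w (vscale (c + h) e)) s i) =
     (fun h => grad (vadd (vadd w (vscale c e)) (vscale h e)) s i).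
    by apply: functional_extensionality => h; rewrite vadd_scale.
  exact: (Hhess (vadd w (vscale c e)) s i k Hs).
have [c [Hc Heq]] := mvt_abs _ _ Hder dk.
rewrite vadd_scale0 in Heq. rewrite Heq.
rewrite -Rmult_minus_distr_r Rabs_mult. apply: Rmult_le_compat_r; first exact: Rabs_pos.
left. apply: HQ => //.
apply: Rle_lt_trans Hyz. apply: norm2_le => j.
rewrite /vsub /w /e /zk /vadd /vscale /basis /dk.
case: (ltngtP j k) => Hjk.
- have -> : (k == j) = false by apply/eqP => Hkj; move: Hjk; rewrite Hkj ltnn.
  have -> : y j + c * 0 - z j = y j - z j by ring. lra.
- have -> : (k == j) = false by apply/eqP => Hkj; move: Hjk; rewrite Hkj ltnn.
  have -> : z j + c * 0 - z j = 0 by ring. have := Rle_0_sqr (y j - z j). rewrite /Rsqr. lra.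
- have Ejk : j = k by apply: val_inj.
  rewrite Ejk eqxx.
  have -> : z k + c * 1 - z k = c by ring.
  have h1 : c * c = Rabs c * Rabs c by rewrite -Rabs_mult Rabs_right //; apply: Rle_ge; nra.
  have h2 : (y k - z k) * (y k - z k) = Rabs dk * Rabs dk by rewrite -Rabs_mult Rabs_right //; apply: Rle_ge; nra.
  rewrite h1 h2. have := Rabs_pos c. nra.
Qed.

Lemma abs_div_le a b h : h <> 0 -> Rabs a <= b * Rabs h -> Rabs (a / h) <= b.
Proof.
move=> Hh H. have Hp := Rabs_pos_lt h Hh.
rewrite /Rdiv Rabs_mult Rabs_inv.
apply: (Rmult_le_reg_r (Rabs h)) => //. rewrite Rmult_assoc Rinv_l; lra.
Qed.

Lemma abs_of_div a h e : h <> 0 -> Rabs (a / h) < e -> Rabs a <= e * Rabs h.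
Proof.
move=> Hh H. have -> : a = (a / h) * h by field.
rewrite Rabs_mult. apply: Rmult_le_compat_r; [exact: Rabs_pos | lra].
Qed.

Lemma gderiv n (grad : vec n -> R -> vec n) (hess : vec n -> R -> mat n)
 (gradt : vec n -> R -> vec n) (x xdot : R -> vec n)
 (Hhess : forall y t i j, 0 <= t -> partial_x (fun z => grad z t i) y j (hess y t i j))
 (Hch : forall y t i j, 0 <= t -> cont_xt (fun z s => hess z s i j) y t)
 (Hgradt : forall y t i, 0 <= t -> deriv_nonneg (fun s => grad y s i) t (gradt y t i))
 (Hxdot : forall t i, 0 <= t -> deriv_nonneg (fun s => x s i) t (xdot t i))
 t i : 0 <= t ->
 deriv_nonneg (fun s => grad (x s) s i) t
   (SUM n (fun k => hess (x t) t i k * xdot t k) + gradt (x t) t i).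
Proof.
move=> Ht eps Heps.
set z := x t.
set M1 := SUM n (fun k => Rabs (xdot t k) + 1).
set M2 := SUM n (fun k => Rabs (hess z t i k)).
have HM1 : 0 <= M1 by apply: sum_ge0 => k; have := Rabs_pos (xdot t k); lra.
have HM2 : 0 <= M2 by apply: sum_ge0 => k; exact: Rabs_pos.
set e1 := eps / (3 * (M1 + 1)).
set e2 := Rmin 1 (eps / (3 * (M2 + 1))).
have He1 : 0 < e1 by apply: Rdiv_lt_0_compat; lra.
have He2 : 0 < e2 by apply: Rmin_pos; [lra | apply: Rdiv_lt_0_compat; lra].
have He2a : e2 <= 1 by apply: Rmin_l.
have He2b : e2 * M2 <= eps / 3.
  apply: Rle_trans (Rmult_le_compat_r _ _ _ HM2 (Rmin_r _ _)) _.
  apply: (Rmult_le_reg_r (3 * (M2 + 1))); first lra.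
  have -> : eps / (3 * (M2 + 1)) * M2 * (3 * (M2 + 1)) = eps * M2 by field; lra.
  nra.
have He1b : e1 * M1 <= eps / 3.
  apply: (Rmult_le_reg_r (3 * (M1 + 1))); first lra.
  have -> : e1 * M1 * (3 * (M1 + 1)) = eps * M1 by rewrite /e1; field; lra.
  nra.
have [dc [Hdc Hcore]] := @core n grad hess Hhess Hch z t i e1 Ht He1.
have [dx [Hdx HX]] : exists d, 0 < d /\ forall k : 'I_n, (fun k d => forall h, h <> 0 -> Rabs h < d ->
    0 <= t + h -> Rabs ((x (t + h) k - x t k) / h - xdot t k) < e2) k d.
  apply: finmin.
  - move=> k d d' Hdd' H h H1 H2 H3. apply: H => //; lra.
  - move=> k. exact: (Hxdot t k Ht e2 He2).
have He3 : 0 < eps / 3 by lra.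
have [dg [Hdg HG]] := Hgradt z t i Ht (eps / 3) He3.
set d := Rmin (dc / (M1 + 1)) (Rmin dx (Rmin dg dc)).
have Hdc' : 0 < dc / (M1 + 1) by apply: Rdiv_lt_0_compat; lra.
exists d; split.
  by apply: Rmin_pos => //; apply: Rmin_pos => //; apply: Rmin_pos.
move=> h Hh0 Hhd Hth.
have Hh1 : Rabs h < dc / (M1 + 1) by apply: Rlt_le_trans Hhd (Rmin_l _ _).
have Hh2 : Rabs h < dx by apply: Rlt_le_trans Hhd (Rle_trans _ _ _ (Rmin_r _ _) (Rmin_l _ _)).
have Hh3 : Rabs h < dg.
  apply: Rlt_le_trans Hhd (Rle_trans _ _ _ (Rmin_r _ _) _).
  apply: Rle_trans (Rmin_r _ _) (Rmin_l _ _).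
have Hh4 : Rabs h < dc.
  apply: Rlt_le_trans Hhd (Rle_trans _ _ _ (Rmin_r _ _) _).
  apply: Rle_trans (Rmin_r _ _) (Rmin_r _ _).
have Hhp := Rabs_pos_lt h Hh0.
set y := x (t + h).
have Hyk : forall k, Rabs (y k - z k) <= (Rabs (xdot t k) + 1) * Rabs h.
  move=> k.
  have : Rabs ((y k - z k) / h) <= Rabs ((y k - z k) / h - xdot t k) + Rabs (xdot t k).
    have := Rabs_triang ((y k - z k) / h - xdot t k) (xdot t k).
    by have -> : (y k - z k) / h - xdot t k + xdot t k = (y k - z k) / h by ring.
  move=> Htri.
  have H1 : Rabs ((y k - z k) / h - xdot t k) < 1.
    have := HX k h Hh0 Hh2 Hth. rewrite -/y -/z. lra.
  have -> : y k - z k = (y k - z k) / h * h by field.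
  rewrite Rabs_mult. apply: Rmult_le_compat_r; [exact: Rabs_pos | lra].
have Hsum : SUM n (fun k => Rabs (y k - z k)) <= M1 * Rabs h.
  rewrite Rmult_comm sum_scal. apply: sum_le => k. rewrite Rmult_comm. exact: Hyk.
have Hnorm : norm2 (vsub y z) < dc.
  eapply Rle_lt_trans; first exact: norm2_le_sum.
  apply: Rle_lt_trans Hsum _.
  have : Rabs h * (M1 + 1) < dc.
    have := Rmult_lt_compat_r (M1 + 1) _ _ (ltac:(lra) : 0 < M1 + 1) Hh1.
    by have -> : dc / (M1 + 1) * (M1 + 1) = dc by field; lra.
  nra.
have Hst : Rabs (t + h - t) < dc by rewrite /Rminus Rplus_comm -Rplus_assoc Rplus_opp_l Rplus_0_l.
have HC := Hcore y (t + h) (ltac:(lra)) Hnorm Hst.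
set E1 := grad y (t + h) i - grad z (t + h) i - SUM n (fun k => hess z t i k * (y k - z k)).
set T2 := SUM n (fun k => hess z t i k * ((y k - z k) / h - xdot t k)).
set E3 := (grad z (t + h) i - grad z t i) / h - gradt z t i.
have HT2 : T2 = / h * SUM n (fun k => hess z t i k * (y k - z k)) - SUM n (fun k => hess z t i k * xdot t k).
  rewrite sum_scal -sum_sub. apply: sum_ext => k. field. exact: Hh0.
have Hid : (grad y (t + h) i - grad z t i) / h -
   (SUM n (fun k => hess z t i k * xdot t k) + gradt z t i) = E1 / h + T2 + E3.
  rewrite HT2 /E1 /E3. field. exact: Hh0.
rewrite -/y -/z Hid.
have B1 : Rabs (E1 / h) <= eps / 3.
  apply: abs_div_le => //. apply: Rle_trans HC _.
  have He1p : 0 <= e1 by lra.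
  apply: Rle_trans (Rmult_le_compat_l e1 _ _ He1p Hsum) _.
  rewrite -Rmult_assoc. apply: Rmult_le_compat_r; [exact: Rabs_pos | lra].
have B2 : Rabs T2 <= eps / 3.
  eapply Rle_trans; first exact: sum_abs. apply: Rle_trans He2b.
  rewrite /M2 sum_scal. apply: sum_le => k.
  rewrite Rabs_mult Rmult_comm. apply: Rmult_le_compat_r; first exact: Rabs_pos.
  left. exact: (HX k h Hh0 Hh2 Hth).
have B3 : Rabs E3 < eps / 3 by exact: (HG h Hh0 Hh3 Hth).
have := Rabs_triang (E1 / h + T2) E3. have := Rabs_triang (E1 / h) T2. lra.
Qed.

Lemma dot_sub_l n (a b d : vec n) : dot (vsub a b) d = dot a d - dot b d.
Proof. rewrite /dot -sum_sub. apply: sum_ext => i. rewrite /vsub; ring. Qed.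

Lemma sum_scal_r n (c : R) (F : 'I_n -> R) : SUM n (fun i => F i * c) = SUM n F * c.
Proof. rewrite Rmult_comm sum_scal. apply: sum_ext => i; ring. Qed.

Lemma strong_mono n (grad : vec n -> R -> vec n) (hess : vec n -> R -> mat n) (m : R)
 (Hhess : forall y t i j, 0 <= t -> partial_x (fun z => grad z t i) y j (hess y t i j))
 (Hch : forall y t i j, 0 <= t -> cont_xt (fun z s => hess z s i j) y t)
 (Hstrong : forall y t, 0 <= t -> loewner_ge_scalar (hess y t) m)
 y z t : 0 <= t ->
 m * dot (vsub y z) (vsub y z) <= dot (vsub (grad y t) (grad z t)) (vsub y z).
Proof.
move=> Ht. set d := vsub y z.
pose phi r := dot (grad (vadd z (vscale r d)) t) d.
pose phi' r := dot d (mulmv (hess (vadd z (vscale r d)) t) d).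
set K := SUM n (fun k => Rabs (d k)).
have HK : 0 <= K by apply: sum_ge0 => k; exact: Rabs_pos.
have Hder : forall r0, derivable_pt_lim phi r0 (phi' r0).
  move=> r0 eps Heps. set w := vadd z (vscale r0 d).
  set e' := eps / ((K + 1) * (K + 1)).
  have He' : 0 < e' by apply: Rdiv_lt_0_compat; nra.
  have [dl [Hdl HQ]] : exists dl, 0 < dl /\ forall i : 'I_n, (fun i dl => forall y s, 0 <= s ->
     norm2 (vsub y w) < dl -> Rabs (s - t) < dl ->
     Rabs (grad y s i - grad w s i - SUM n (fun k => hess w t i k * (y k - w k)))
       <= e' * SUM n (fun k => Rabs (y k - w k))) i dl.
    apply: finmin.
    - move=> i a b Hab H y' s Hs H1 H2. apply: H => //; lra.
    - move=> i. exact: (@core n grad hess Hhess Hch w t i e' Ht He').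
  have Hdl' : 0 < dl / (K + 1) by apply: Rdiv_lt_0_compat; lra.
  exists (mkposreal _ Hdl') => h Hh0 Hh /=.
  have Hhp := Rabs_pos_lt h Hh0.
  set yy := vadd w (vscale h d).
  have Eyy : vadd z (vscale (r0 + h) d) = yy by rewrite /yy /w vadd_scale.
  have Ediff : forall k, yy k - w k = h * d k by move=> k; rewrite /yy /vadd /vscale; ring.
  have Hsk : SUM n (fun k => Rabs (yy k - w k)) = Rabs h * K.
    rewrite /K sum_scal. apply: sum_ext => k. by rewrite Ediff Rabs_mult.
  have Hnorm : norm2 (vsub yy w) < dl.
    eapply Rle_lt_trans; first exact: norm2_le_sum.
    rewrite /vsub Hsk.
    have := Rmult_lt_compat_r (K + 1) _ _ (ltac:(lra) : 0 < K + 1) Hh.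
    have -> : dl / (K + 1) * (K + 1) = dl by field; lra.
    nra.
  have Htt : Rabs (t - t) < dl by rewrite Rminus_diag Rabs_R0.
  rewrite /phi /phi' Eyy -/w.
  have Hid : (dot (grad yy t) d - dot (grad w t) d) / h - dot d (mulmv (hess w t) d) =
    SUM n (fun i => d i * ((grad yy t i - grad w t i - SUM n (fun k => hess w t i k * (yy k - w k))) / h)).
    rewrite /dot /mulmv -sum_sub. rewrite /Rdiv Rmult_comm sum_scal -sum_sub.
    apply: sum_ext => i.
    have -> : SUM n (fun k => hess w t i k * (yy k - w k)) = h * SUM n (fun k => hess w t i k * d k).
      rewrite sum_scal. apply: sum_ext => k. rewrite Ediff; ring.
    field. exact: Hh0.
  rewrite Hid.
  eapply Rle_lt_trans; first exact: sum_abs.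
  apply: (Rle_lt_trans _ (SUM n (fun i => Rabs (d i) * (e' * K)))).
    apply: sum_le => i. rewrite Rabs_mult. apply: Rmult_le_compat_l; first exact: Rabs_pos.
    apply: abs_div_le => //. rewrite Rmult_assoc (Rmult_comm K) -Hsk. exact: (HQ i yy t Ht Hnorm Htt).
  have -> : SUM n (fun i => Rabs (d i) * (e' * K)) = e' * K * K.
    rewrite sum_scal_r -/K; ring.
  rewrite /e'.
  apply: (Rmult_lt_reg_r ((K + 1) * (K + 1))); first nra.
  have -> : eps / ((K + 1) * (K + 1)) * K * K * ((K + 1) * (K + 1)) = eps * (K * K) by field; lra.
  nra.
have [c [Hc _]] := MVT_cor2 phi phi' 0 1 Rlt_0_1 (fun c _ => Hder c).
have E1 : vadd z (vscale 1 d) = y.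
  apply: functional_extensionality => j. rewrite /vadd /vscale /d /vsub; ring.
have E0 : vadd z (vscale 0 d) = z by exact: vadd_scale0.
rewrite dot_sub_l.
have -> : dot (grad y t) d - dot (grad z t) d = phi 1 - phi 0 by rewrite /phi E1 E0.
rewrite Hc Rminus_0_r Rmult_1_r /phi'.
exact: Hstrong.
Qed.

Lemma ext_deriv (g d : R -> R) :
  (forall t, 0 <= t -> deriv_nonneg g t (d t)) ->
  forall t, 0 <= t ->
  derivable_pt_lim (fun s => if Rle_dec 0 s then g s else g 0 + s * d 0) t (d t).
Proof.
move=> H t Ht eps Heps.
have [de [Hde Hd]] := H t Ht eps Heps.
case: (Rle_lt_or_eq_dec 0 t Ht) => Ht'.
- have Hp : 0 < Rmin de t by apply: Rmin_pos.
  exists (mkposreal _ Hp) => h Hh0 Hh /=.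
  have Hh1 : Rabs h < de by apply: Rlt_le_trans Hh (Rmin_l _ _).
  have Hh2 : Rabs h < t by apply: Rlt_le_trans Hh (Rmin_r _ _).
  have Hth : 0 <= t + h by have := Rle_abs (- h); rewrite Rabs_Ropp; lra.
  destruct (Rle_dec 0 (t + h)); last lra.
  destruct (Rle_dec 0 t); last lra.
  exact: Hd.
- subst t. exists (mkposreal _ Hde) => h Hh0 Hh /=.
  destruct (Rle_dec 0 0); last lra.
  destruct (Rle_dec 0 (0 + h)) as [Hh'|Hh'].
  + exact: Hd.
  + have -> : (g 0 + (0 + h) * d 0 - g 0) / h - d 0 = 0 by field.
    by rewrite Rabs_R0.
Qed.

Lemma sum_deriv n (F : 'I_n -> R -> R) (F' : 'I_n -> R) s :
  (forall i, derivable_pt_lim (F i) s (F' i)) ->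
  derivable_pt_lim (fun r => SUM n (fun i => F i r)) s (SUM n F').
Proof.
elim: n F F' => [|n IH] F F' H.
  have -> : (fun r => SUM 0 (fun i => F i r)) = fct_cte 0.
    apply: functional_extensionality => r. by rewrite big_ord0.
  rewrite big_ord0. exact: derivable_pt_lim_const.
have -> : (fun r => SUM n.+1 (fun i => F i r)) =
   plus_fct (fun r => SUM n (fun i => F (widen_ord (leqnSn n) i) r)) (F ord_max).
  apply: functional_extensionality => r. by rewrite big_ord_recr.
rewrite big_ord_recr /=.
apply: derivable_pt_lim_plus; last exact: H.
apply: IH => i. exact: H.
Qed.

Lemma min_zero (f : R -> R) l : derivable_pt_lim f 0 l -> (forall s, f 0 <= f s) -> l = 0.
Proof.
move=> H Hm.
case: (Rtotal_order l 0) => [Hl|[Hl|Hl]] //.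
- have [de Hde] := H (- l) (ltac:(lra)).
  have Hp := cond_pos de.
  have Hh0 : de / 2 <> 0 by lra.
  have Hh : Rabs (de / 2) < de by rewrite Rabs_right; lra.
  have := Hde _ Hh0 Hh. rewrite Rplus_0_l.
  have : 0 <= (f (de / 2) - f 0) / (de / 2).
    apply: Rmult_le_pos; [have := Hm (de / 2); lra | apply: Rlt_le; apply: Rinv_0_lt_compat; lra].
  move=> Hq Ha. have := Rle_abs ((f (de / 2) - f 0) / (de / 2) - l). lra.
- have [de Hde] := H l Hl.
  have Hp := cond_pos de.
  have Hh0 : - (de / 2) <> 0 by lra.
  have Hh : Rabs (- (de / 2)) < de by rewrite Rabs_Ropp Rabs_right; lra.
  have := Hde _ Hh0 Hh. rewrite Rplus_0_l.
  have : (f (- (de / 2)) - f 0) / (- (de / 2)) <= 0.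
    have -> : (f (- (de / 2)) - f 0) / (- (de / 2)) = - ((f (- (de / 2)) - f 0) / (de / 2)) by field; lra.
    have : 0 <= (f (- (de / 2)) - f 0) / (de / 2).
      apply: Rmult_le_pos; [have := Hm (- (de / 2)); lra | apply: Rlt_le; apply: Rinv_0_lt_compat; lra].
    lra.
  move=> Hq Ha. have := Rle_abs (- ((f (- (de / 2)) - f 0) / - (de / 2) - l)). rewrite Rabs_Ropp. lra.
Qed.

Theorem lemma1 (n : nat)
  (f0 : vec n -> R -> R)
  (grad : vec n -> R -> vec n)          (* nabla_x f0 *)
  (hess : vec n -> R -> mat n)          (* nabla_xx f0 *)
  (ft : vec n -> R -> R)                (* d/dt f0 *)
  (gradt : vec n -> R -> vec n)         (* nabla_xt f0 *)
  (m : R) (P : mat n) (sigma : R)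
  (xstar : R -> vec n) (x : R -> vec n) (xdot : R -> vec n) (x0 : vec n)
  (Hgrad : forall y t i, 0 <= t -> partial_x (fun z => f0 z t) y i (grad y t i))
  (Hhess : forall y t i j, 0 <= t ->
            partial_x (fun z => grad z t i) y j (hess y t i j))
  (Hft : forall y t, 0 <= t -> deriv_nonneg (fun s => f0 y s) t (ft y t))
  (Hgradt : forall y t i, 0 <= t -> deriv_nonneg (fun s => grad y s i) t (gradt y t i))
  (Hcont_grad : forall y t i, 0 <= t -> cont_xt (fun z s => grad z s i) y t)
  (Hcont_hess : forall y t i j, 0 <= t -> cont_xt (fun z s => hess z s i j) y t)
  (Hcont_ft : forall y t, 0 <= t -> cont_xt ft y t)
  (Hcont_gradt : forall y t i, 0 <= t -> cont_xt (fun z s => gradt z s i) y t)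
  (Hm : 0 < m)
  (Hstrong : forall y t, 0 <= t -> loewner_ge_scalar (hess y t) m)
  (Hxstar : forall t, 0 <= t -> forall y, f0 (xstar t) t <= f0 y t)
  (HP : spd P) (Hsigma : 0 < sigma) (HPsigma : loewner_ge_scalar P sigma)
  (Hx0 : x 0 = x0)
  (Hxdot : forall t i, 0 <= t -> deriv_nonneg (fun s => x s i) t (xdot t i))
  (Hode : forall t, 0 <= t ->
     mulmv (hess (x t) t) (xdot t) =
     vopp (vadd (mulmv P (grad (x t) t)) (gradt (x t) t))) :
  exists C : R, 0 <= C /\
    forall t, 0 <= t -> norm2 (vsub (x t) (xstar t)) <= C * exp (- sigma * t).
Proof.
have Hgs : forall t, 0 <= t -> forall i, grad (xstar t) t i = 0.
  move=> t Ht i. have H := Hgrad (xstar t) t i Ht. rewrite /partial_x in H.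
  apply: (@min_zero _ _ H) => s /=.
  rewrite vadd_scale0. exact: Hxstar.
set g := fun s => grad (x s) s.
pose dG i s := SUM n (fun k => hess (x s) s i k * xdot s k) + gradt (x s) s i.
have HdG : forall i s, 0 <= s -> dG i s = - mulmv P (g s) i.
  move=> i s Hs. have := congr1 (fun v => v i) (Hode s Hs).
  rewrite /dG /mulmv /vopp /vadd /g /= => ->. ring.
pose G i s := if Rle_dec 0 s then g s i else g 0 i + s * dG i 0.
have HGd : forall i s, 0 <= s -> derivable_pt_lim (G i) s (dG i s).
  move=> i. apply: ext_deriv => s Hs.
  exact: (@gderiv n grad hess gradt x xdot Hhess Hcont_hess Hgradt Hxdot s i Hs).
have HGe : forall i s, 0 <= s -> G i s = g s i.
  move=> i s Hs. rewrite /G. by destruct (Rle_dec 0 s).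
pose W s := SUM n (fun i => G i s * G i s) * exp (2 * sigma * s).
pose W' s := SUM n (fun i => dG i s * G i s + G i s * dG i s) * exp (2 * sigma * s)
   + SUM n (fun i => G i s * G i s) * (exp (2 * sigma * s) * (2 * sigma)).
have HW : forall s, 0 <= s -> derivable_pt_lim W s (W' s).
  move=> s Hs.
  have H1 : derivable_pt_lim (fun r => SUM n (fun i => G i r * G i r)) s
       (SUM n (fun i => dG i s * G i s + G i s * dG i s)).
    apply: sum_deriv => i. exact: (derivable_pt_lim_mult _ _ _ _ _ (HGd i s Hs) (HGd i s Hs)).
  have H2a : derivable_pt_lim (fun r => 2 * sigma * r) s (2 * sigma).
    have := derivable_pt_lim_scal id (2 * sigma) s 1 (derivable_pt_lim_id s).
    by rewrite Rmult_1_r.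
  have H2 : derivable_pt_lim (fun r => exp (2 * sigma * r)) s (exp (2 * sigma * s) * (2 * sigma)).
    exact: (derivable_pt_lim_comp _ exp _ _ _ H2a (derivable_pt_lim_exp _)).
  exact: (derivable_pt_lim_mult _ _ _ _ _ H1 H2).
have HS2 : forall s, 0 <= s -> SUM n (fun i => G i s * G i s) = dot (g s) (g s).
  move=> s Hs. apply: sum_ext => i. by rewrite HGe.
have HWneg : forall s, 0 <= s -> W' s <= 0.
  move=> s Hs.
  have HS1 : SUM n (fun i => dG i s * G i s + G i s * dG i s) = -2 * dot (g s) (mulmv P (g s)).
    rewrite /dot sum_scal. apply: sum_ext => i. rewrite HGe // HdG //. ring.
  rewrite /W' HS1 HS2 //.
  have := HPsigma (g s). have := exp_pos (2 * sigma * s).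
  move=> He Hp. nra.
have Hdec : forall t, 0 <= t -> dot (g t) (g t) * exp (2 * sigma * t) <= dot (g 0) (g 0).
  move=> t Ht.
  have E0 : W 0 = dot (g 0) (g 0) by rewrite /W HS2; [rewrite Rmult_0_r exp_0; ring | lra].
  have Et : W t = dot (g t) (g t) * exp (2 * sigma * t) by rewrite /W HS2.
  rewrite -Et -E0.
  case: (Rle_lt_or_eq_dec 0 t Ht) => Ht'; last by subst t; lra.
  have [c [Hc1 Hc2]] := MVT_cor2 W W' 0 t Ht' (fun c Hc => HW c (proj1 Hc)).
  have := HWneg c (ltac:(lra)). nra.
exists (norm2 (g 0) / m). split.
  apply: Rmult_le_pos; [exact: sqrt_pos | apply: Rlt_le; exact: Rinv_0_lt_compat].
move=> t Ht.
set d := vsub (x t) (xstar t).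
have Hmono := @strong_mono n grad hess m Hhess Hcont_hess Hstrong (x t) (xstar t) t Ht.
have Egs : vsub (grad (x t) t) (grad (xstar t) t) = g t.
  apply: functional_extensionality => j. rewrite /vsub Hgs //. rewrite /g; ring.
rewrite Egs -/d in Hmono.
have Hexp : dot (fun i => g t i - m * d i) (fun i => g t i - m * d i) =
   dot (g t) (g t) - 2 * m * dot (g t) d + m * m * dot d d.
  rewrite /dot (sum_scal _ (2 * m)) (sum_scal _ (m * m)) -sum_sub -sum_add.
  apply: sum_ext => i; ring.
have H0 := dot_ge0 _ (fun i => g t i - m * d i). rewrite Hexp in H0.
have Hdd := dot_ge0 _ d.
have Hm2 := Rmult_le_compat_l m _ _ (Rlt_le _ _ Hm) Hmono.
have Hq : m * m * dot d d <= dot (g t) (g t) by lra.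
have Hd := Hdec t Ht.
set e := exp (- sigma * t).
have Hepos : 0 < e by apply: exp_pos.
have Hee : exp (2 * sigma * t) * (e * e) = 1.
  rewrite /e -!exp_plus. have -> : 2 * sigma * t + (- sigma * t + - sigma * t) = 0 by ring.
  exact: exp_0.
have HGG : dot (g t) (g t) <= dot (g 0) (g 0) * (e * e).
  have Hee2 : 0 <= e * e by nra.
  have := Rmult_le_compat_r (e * e) _ _ Hee2 Hd.
  rewrite Rmult_assoc Hee Rmult_1_r. lra.
have Hmn : m * norm2 d <= norm2 (g 0) * e.
  have -> : m * norm2 d = sqrt (m * m * dot d d).
    rewrite sqrt_mult_alt; last nra. rewrite sqrt_square //; lra.
  have -> : norm2 (g 0) * e = sqrt (dot (g 0) (g 0) * (e * e)).
    rewrite sqrt_mult_alt; last exact: dot_ge0. rewrite sqrt_square //; lra.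
  apply: sqrt_le_1_alt. lra.
have -> : norm2 (g 0) / m * e = (norm2 (g 0) * e) / m by field; lra.
apply: (Rmult_le_reg_l m) => //.
have -> : m * (norm2 (g 0) * e / m) = norm2 (g 0) * e by field; lra.
exact: Hmn.
Qed.
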